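(* Let $p,p',p''\geq 5$ be three distinct primes. Then the set of integers $x$ such that for each $q\in\{p,p',p''\}$ there is an odd integer $k_q$ with $x=k_qq+4N(q/6)$ or $x=k_qq-4N(q/6)$ (the triple non-ranks of $p,p',p''$) is the union of exactly $2^3=8$ pairwise distinct arithmetic progressions (residue classes) with common difference $2pp'p''$.
   Context: $N(x)$ denotes the integer nearest to the real number $x$. *)

(* Defs.v *)
From mathcomp Require Import all_boot all_order all_algebra.
Set Implicit Arguments. Unset Strict Implicit. Unset Printing Implicit Defensive.
Import Order.TTheory GRing.Theory Num.Theory.
Local Open Scope ring_scope.

(* N(x): the integer nearest to the rational x (ties rounded up; ties never
   occur for x = q/6 with q a prime >= 5). *)
Definition nearest (x : rat) : int := Num.floor (x + 1 / 2).

Definition nonrank (q : nat) (x : int) : Prop :=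
  exists k : int, ~~ (2 %| k)%Z /\
    (x = k * q%:Z + 4 * nearest (q%:Q / 6) \/ x = k * q%:Z - 4 * nearest (q%:Q / 6)).

Definition triple_nonrank (p p' p'' : nat) (x : int) : Prop :=
  nonrank p x /\ nonrank p' x /\ nonrank p'' x.

(* Main.v *)
Require Import Defs.
From mathcomp Require Import all_boot all_order all_algebra.
From mathcomp Require Import zify ring lra.
Import Order.TTheory GRing.Theory Num.Theory.
Local Open Scope ring_scope.

Definition cc (q : nat) : int := 4 * nearest (q%:Q / 6).
Definition aa (q : nat) (b : bool) : int := q%:Z + (if b then cc q else - cc q).

Lemma N_bounds (q : nat) : (5 <= q)%N ->
  1 <= nearest (q%:Q / 6) /\ nearest (q%:Q / 6) < q%:Z.
Proof.
move=> hq; rewrite /nearest.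
have h5 : (5 : rat) <= q%:Q.
  have : (5%:Z <= q%:Z) by rewrite lez_nat.
  by rewrite -(ler_int rat).
split.
  rewrite floor_ge_int. rewrite /=. lra.
rewrite floor_lt_int. lra.
Qed.

Lemma odd_q q : prime q -> (5 <= q)%N -> odd q.
Proof. by move=> pq q5; case: (even_prime pq) => // e; move: q5; rewrite e. Qed.

Lemma aa_odd q b : prime q -> (5 <= q)%N -> (aa q b == 1 %[mod 2])%Z.
Proof.
move=> pq q5; have oq := @odd_q q pq q5.
have hq : (q %% 2 = 1)%N by rewrite modn2 oq.
rewrite eqz_mod_dvd /aa /cc; case: b; lia.
Qed.

Lemma mod2q q x y : prime q -> (5 <= q)%N ->
  (x == y %[mod 2 * q%:Z])%Z = (x == y %[mod 2])%Z && (x == y %[mod q%:Z])%Z.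
Proof.
move=> pq q5; rewrite zchinese_remainder //.
by rewrite coprimezE /= coprime2n (@odd_q q pq q5).
Qed.

Lemma aa_inj q b1 b2 : prime q -> (5 <= q)%N ->
  (aa q b1 == aa q b2 %[mod q%:Z])%Z -> b1 = b2.
Proof.
move=> pq q5; have [h1 h2] := @N_bounds q q5.
case: b1; case: b2 => //; rewrite eqz_mod_dvd /aa /cc;
  set N := nearest _.
- have -> : q%:Z + 4 * N - (q%:Z + - (4 * N)) = 8 * N by ring.
  rewrite Gauss_dvdzr; last first.
    by rewrite coprimezE /= coprime_sym (@coprime_pexpl 3 2 q isT) coprime2n (@odd_q q pq q5).
  move/dvdzP => [m hm]; exfalso; have [hm0|hm1] : m <= 0 \/ 1 <= m by lia.
    have : m * q%:Z <= 0 by rewrite pmulr_lle0 //; lia. lia.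
    have : q%:Z <= m * q%:Z by rewrite ler_peMl //; lia. lia.
- have -> : q%:Z + - (4 * N) - (q%:Z + 4 * N) = - (8 * N) by ring.
  rewrite rpredN Gauss_dvdzr; last first.
    by rewrite coprimezE /= coprime_sym (@coprime_pexpl 3 2 q isT) coprime2n (@odd_q q pq q5).
  move/dvdzP => [m hm]; exfalso; have [hm0|hm1] : m <= 0 \/ 1 <= m by lia.
    have : m * q%:Z <= 0 by rewrite pmulr_lle0 //; lia. lia.
    have : q%:Z <= m * q%:Z by rewrite ler_peMl //; lia. lia.
Qed.
Lemma nonrankE q x : (0 < q)%N -> nonrank q x <-> exists b, (x == aa q b %[mod 2 * q%:Z])%Z.
Proof.
move=> q0.
have qn0 : q%:Z != 0 by rewrite eqz_nat -lt0n.
rewrite /nonrank /aa -/(cc q); split.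
  move=> [k [hk [->|->]]].
    exists true; rewrite eqz_mod_dvd.
    have -> : k * q%:Z + cc q - (q%:Z + cc q) = (k - 1) * q%:Z by ring.
    by rewrite dvdz_mul2r //; lia.
  exists false; rewrite eqz_mod_dvd.
  have -> : k * q%:Z - cc q - (q%:Z + - cc q) = (k - 1) * q%:Z by ring.
  by rewrite dvdz_mul2r //; lia.
move=> [b]; rewrite eqz_mod_dvd => /dvdzP [m hm].
exists (m * 2 + 1); split; first lia.
case: b hm => /= hm; [left|right].
  have -> : x = x - (q%:Z + cc q) + (q%:Z + cc q) by ring.
  rewrite hm; ring.
have -> : x = x - (q%:Z + - cc q) + (q%:Z + - cc q) by ring.
rewrite hm; ring.
Qed.

Lemma mtrans {d x y z : int} : (x == y %[mod d])%Z -> (y == z %[mod d])%Z -> (x == z %[mod d])%Z.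
Proof. by move=> /eqP -> . Qed.
Lemma msym {d x y : int} : (x == y %[mod d])%Z -> (y == x %[mod d])%Z.
Proof. by rewrite eq_sym. Qed.
Lemma modMl {m n x y : int} : (x == y %[mod m * n])%Z -> (x == y %[mod m])%Z.
Proof. rewrite !eqz_mod_dvd; apply: dvdz_trans; exact: dvdz_mulr. Qed.
Lemma modMr {m n x y : int} : (x == y %[mod m * n])%Z -> (x == y %[mod n])%Z.
Proof. rewrite !eqz_mod_dvd; apply: dvdz_trans; exact: dvdz_mull. Qed.
Lemma cop_primes p q : prime p -> prime q -> p != q -> coprime p q.
Proof. by move=> pp pq ne; rewrite prime_coprime // dvdn_prime2. Qed.

Lemma bits_inj (i j : 'I_8) :
  odd i = odd j -> odd i./2 = odd j./2 -> odd i./2./2 = odd j./2./2 -> i = j.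
Proof.
case: i => i hi; case: j => j hj /= h1 h2 h3; apply: val_inj => /=.
move: hi hj h1 h2 h3.
do 8? (case: i => [|i]); do 8? (case: j => [|j]) => //.
Qed.

Lemma bits_ex b1 b2 b3 : exists i : 'I_8, [/\ odd i = b1, odd i./2 = b2 & odd i./2./2 = b3].
Proof.
case: b1; case: b2; case: b3;
 [exists (@Ordinal 8 7 isT) | exists (@Ordinal 8 3 isT) | exists (@Ordinal 8 5 isT)
 | exists (@Ordinal 8 1 isT) | exists (@Ordinal 8 6 isT) | exists (@Ordinal 8 2 isT)
 | exists (@Ordinal 8 4 isT) | exists (@Ordinal 8 0 isT)]; by [].
Qed.

Theorem theorem3p11 (p p' p'' : nat) :
  prime p -> prime p' -> prime p'' ->
  (5 <= p)%N -> (5 <= p')%N -> (5 <= p'')%N ->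
  p != p' -> p != p'' -> p' != p'' ->
  exists r : 'I_8 -> int,
    (forall i j : 'I_8, (r i == r j %[mod (2 * (p * p' * p'')%N%:Z)])%Z -> i = j) /\
    (forall x : int, triple_nonrank p p' p'' x <->
       exists i : 'I_8, (x == r i %[mod (2 * (p * p' * p'')%N%:Z)])%Z).
Proof.
move=> pp pp' pp'' h5 h5' h5'' n12 n13 n23.
set P := (p * p' * p'')%N%:Z.
have c2P : coprimez 2 P.
  by rewrite coprimezE /= coprime2n !oddM (odd_q p pp h5) (odd_q p' pp' h5') (odd_q p'' pp'' h5'').
have cA : coprimez (p * p')%N%:Z p''%:Z.
  by rewrite coprimezE /= coprimeMl !cop_primes.
have cB : coprimez p%:Z p'%:Z by rewrite coprimezE /= cop_primes.
have PE : P = (p * p')%N%:Z * p''%:Z by rewrite /P PoszM.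
have ppE : (p * p')%N%:Z = p%:Z * p'%:Z by rewrite PoszM.
have modP : forall x y, (x == y %[mod 2 * P])%Z = [&& (x == y %[mod 2])%Z,
    (x == y %[mod p%:Z])%Z, (x == y %[mod p'%:Z])%Z & (x == y %[mod p''%:Z])%Z].
  move=> x y; rewrite zchinese_remainder // PE zchinese_remainder // ppE.
  by rewrite zchinese_remainder // -!andbA.
pose R b1 b2 b3 := zchinese 2 P 1 (zchinese (p * p')%N%:Z p''%:Z
   (zchinese p%:Z p'%:Z (aa p b1) (aa p' b2)) (aa p'' b3)).
have Rc : forall b1 b2 b3, [/\ (R b1 b2 b3 == 1 %[mod 2])%Z,
    (R b1 b2 b3 == aa p b1 %[mod p%:Z])%Z, (R b1 b2 b3 == aa p' b2 %[mod p'%:Z])%Z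
    & (R b1 b2 b3 == aa p'' b3 %[mod p''%:Z])%Z].
  move=> b1 b2 b3; rewrite /R.
  set I2 := zchinese p%:Z p'%:Z _ _; set I1 := zchinese _ _ I2 _.
  have e1 : (zchinese 2 P 1 I1 == I1 %[mod (p * p')%N%:Z * p''%:Z])%Z.
    by rewrite -PE; apply/eqP; apply: zchinese_modr.
  have e2 : (I1 == I2 %[mod (p * p')%N%:Z])%Z by apply/eqP; apply: zchinese_modl.
  have e3 : (I1 == aa p'' b3 %[mod p''%:Z])%Z by apply/eqP; apply: zchinese_modr.
  have e4 : (I2 == aa p b1 %[mod p%:Z])%Z by apply/eqP; apply: zchinese_modl.
  have e5 : (I2 == aa p' b2 %[mod p'%:Z])%Z by apply/eqP; apply: zchinese_modr.
  have e6 : (zchinese 2 P 1 I1 == I2 %[mod p%:Z * p'%:Z])%Z.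
    by rewrite -ppE; apply: mtrans e2; apply: modMl e1.
  split.
  - by apply/eqP; apply: zchinese_modl.
  - by apply: mtrans e4; apply: modMl e6.
  - by apply: mtrans e5; apply: modMr e6.
  - by apply: mtrans e3; apply: modMr e1.
exists (fun i => R (odd i) (odd i./2) (odd i./2./2)); split.
  move=> i j; rewrite modP => /and4P [_ h1 h2 h3].
  case: (Rc (odd i) (odd i./2) (odd i./2./2)) => _ a1 a2 a3.
  case: (Rc (odd j) (odd j./2) (odd j./2./2)) => _ b1 b2 b3.
  apply: bits_inj.
  - by apply: (aa_inj p _ _ pp h5); apply: mtrans (msym a1) (mtrans h1 b1).
  - by apply: (aa_inj p' _ _ pp' h5'); apply: mtrans (msym a2) (mtrans h2 b2).
  - by apply: (aa_inj p'' _ _ pp'' h5''); apply: mtrans (msym a3) (mtrans h3 b3).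
move=> x; split.
  move=> [/(nonrankE p x (prime_gt0 pp)) [b1 hb1]
          [/(nonrankE p' x (prime_gt0 pp')) [b2 hb2]
           /(nonrankE p'' x (prime_gt0 pp'')) [b3 hb3]]].
  have [i [e1 e2 e3]] := bits_ex b1 b2 b3.
  exists i; rewrite modP e1 e2 e3.
  case: (Rc b1 b2 b3) => r2 r1 r1' r1''.
  move: hb1; rewrite (mod2q p _ _ pp h5) => /andP [hb1a hb1b].
  move: hb2; rewrite (mod2q p' _ _ pp' h5') => /andP [_ hb2b].
  move: hb3; rewrite (mod2q p'' _ _ pp'' h5'') => /andP [_ hb3b].
  apply/and4P; split.
  - exact: mtrans (mtrans hb1a (aa_odd p b1 pp h5)) (msym r2).
  - exact: mtrans hb1b (msym r1).
  - exact: mtrans hb2b (msym r1').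
  - exact: mtrans hb3b (msym r1'').
move=> [i]; rewrite modP => /and4P [h2 h h' h''].
case: (Rc (odd i) (odd i./2) (odd i./2./2)) => r2 r1 r1' r1''.
have hx2 := mtrans h2 r2.
split; [|split].
- apply/(nonrankE p x (prime_gt0 pp)); exists (odd i).
  by rewrite (mod2q p _ _ pp h5) (mtrans hx2 (msym (aa_odd p _ pp h5))) (mtrans h r1).
- apply/(nonrankE p' x (prime_gt0 pp')); exists (odd i./2).
  by rewrite (mod2q p' _ _ pp' h5') (mtrans hx2 (msym (aa_odd p' _ pp' h5'))) (mtrans h' r1').
- apply/(nonrankE p'' x (prime_gt0 pp'')); exists (odd i./2./2).
  by rewrite (mod2q p'' _ _ pp'' h5'') (mtrans hx2 (msym (aa_odd p'' _ pp'' h5''))) (mtrans h'' r1'').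
Qed.
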